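(* Let $\mathsf V$ be a variety, $h:\mathbf F_{\mathsf V}(z)\to\prod_{k=1}^m\mathbf E_k$ an algebraic e-generalization problem, and $\theta$ a congruence of $\mathbf F_{\mathsf V}(z)$. Then: (1) if $\theta\in\mathscr G(h)$, then $\theta$ is exact and $\theta\subseteq\ker(h)$; (2) if $\theta$ is projective and $\theta\subseteq\ker(h)$, then $\theta\in\mathscr G(h)$.
   Context: $\mathbf F_{\mathsf V}(z)$ is the free algebra of the variety $\mathsf V$ on one generator $z$. An algebra is projective in $\mathsf V$ iff it is a retract of a free algebra of $\mathsf V$ (there are homomorphisms $i:\mathbf P\to\mathbf F_{\mathsf V}(Y)$, $j:\mathbf F_{\mathsf V}(Y)\to\mathbf P$ with $j\circ i=\mathrm{id}$); it is exact in $\mathsf V$ if isomorphic to a finitely generated subalgebra of a finitely generated free algebra of $\mathsf V$. A congruence $\theta$ of $\mathbf F_{\mathsf V}(z)$ is exact (resp. projective) if $\mathbf F_{\mathsf V}(z)/\theta$ is exact (resp. projective) in $\mathsf V$. An algebraic e-generalization problem is a homomorphism $h:\mathbf F_{\mathsf V}(z)\to\prod_{k=1}^m\mathbf E_k$ with each $\mathbf E_k$ a 1-generated exact algebra and $p_k\circ h$ surjective for each projection $p_k$. A solution of $h$ is a homomorphism $g:\mathbf F_{\mathsf V}(z)\to\mathbf P$ with $\mathbf P$ finitely generated and projective in $\mathsf V$ such that $f\circ g=h$ for some homomorphism $f:\mathbf P\to\prod_k\mathbf E_k$. $\ker(g)=\{(a,a'):g(a)=g(a')\}$. $\mathscr G(h)$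 is the set of G-congruences of $h$, i.e. $\{\ker(g): g \text{ a solution of } h\}$. *)

(* Defs.v *)
From mathcomp Require Import all_boot.
From Stdlib Require Import ClassicalEpsilon.

Set Implicit Arguments.
Unset Strict Implicit.
Unset Printing Implicit Defensive.

Record signature := Signature { ops : Type; ar : ops -> nat }.

Record algebra (L : signature) := Algebra {
  carrier :> Type;
  op : forall o : ops L, ('I_(ar o) -> carrier) -> carrier }.
Arguments op {L} a o _.

Section UA.
Variable L : signature.

Inductive term (X : Type) : Type :=
  | Var : X -> term X
  | App : forall o : ops L, ('I_(ar o) -> term X) -> term X.

Fixpoint eval (A : algebra L) (X : Type) (env : X -> A) (t : term X) : A :=
  match t with
  | Var x => env x
  | App o args => op A o (fun i => eval env (args i))
  end.

(** A variety, given by a set of identities (Birkhoff). *)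
Record variety := Variety { identities : term nat -> term nat -> Prop }.

Definition inV (V : variety) (A : algebra L) : Prop :=
  forall s t, identities V s t -> forall env : nat -> A, eval env s = eval env t.

Definition hom (A B : algebra L) (f : A -> B) : Prop :=
  forall o (args : 'I_(ar o) -> A), f (op A o args) = op B o (fun i => f (args i)).

Definition iso (A B : algebra L) : Prop :=
  exists (f : A -> B) (g : B -> A),
    hom f /\ (forall a, g (f a) = a) /\ (forall b, f (g b) = b).

Definition closed (A : algebra L) (U : A -> Prop) : Prop :=
  forall o (args : 'I_(ar o) -> A), (forall i, U (args i)) -> U (op A o args).

Definition generated (A : algebra L) (S : A -> Prop) (x : A) : Prop :=
  forall U : A -> Prop, closed U -> (forall y, S y -> U y) -> U x.

Definition fin_generated (A : algebra L) : Prop :=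
  exists (n : nat) (gens : 'I_n -> A),
    forall x, generated (fun y => exists i, y = gens i) x.

Definition one_generated (A : algebra L) : Prop :=
  exists a : A, forall x, generated (fun y => y = a) x.

Definition subalg (A : algebra L) (U : A -> Prop) (HU : closed U) : algebra L :=
  @Algebra L {x : A | U x}
    (fun o args => exist U (op A o (fun i => proj1_sig (args i)))
                         (HU o _ (fun i => proj2_sig (args i)))).

Definition is_free (V : variety) (Y : Type) (F : algebra L) (gen : Y -> F) : Prop :=
  inV V F /\
  forall (B : algebra L) (f : Y -> B), inV V B ->
    (exists g : F -> B, hom g /\ forall y, g (gen y) = f y) /\
    (forall g1 g2 : F -> B, hom g1 -> hom g2 ->
       (forall y, g1 (gen y) = g2 (gen y)) -> forall x, g1 x = g2 x).

Definition projective (V : variety) (P : algebra L) : Prop :=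
  exists (Y : Type) (F : algebra L) (gen : Y -> F), is_free V gen /\
  exists (i : P -> F) (j : F -> P), hom i /\ hom j /\ forall p, j (i p) = p.

Definition exact (V : variety) (P : algebra L) : Prop :=
  exists (Y : Type) (F : algebra L) (gen : Y -> F), is_free V gen /\ fin_generated F /\
  exists (U : F -> Prop) (HU : closed U),
    fin_generated (subalg HU) /\ iso P (subalg HU).

Definition congruence (A : algebra L) (th : A -> A -> Prop) : Prop :=
  (forall a, th a a) /\ (forall a b, th a b -> th b a) /\
  (forall a b c, th a b -> th b c -> th a c) /\
  (forall o (args1 args2 : 'I_(ar o) -> A),
     (forall i, th (args1 i) (args2 i)) -> th (op A o args1) (op A o args2)).

Definition qcarrier (A : algebra L) (th : A -> A -> Prop) : Type :=
  {c : A -> Prop | exists a, c = th a}.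

Definition qrep (A : algebra L) (th : A -> A -> Prop) (c : qcarrier th) : A :=
  proj1_sig (constructive_indefinite_description _ (proj2_sig c)).

Definition qclass (A : algebra L) (th : A -> A -> Prop) (a : A) : qcarrier th :=
  exist (fun c => exists a, c = th a) (th a) (ex_intro _ a erefl).

(** The quotient algebra A / th (meaningful when th is a congruence). *)
Definition quotient (A : algebra L) (th : A -> A -> Prop) : algebra L :=
  @Algebra L (qcarrier th)
    (fun o args => qclass th (op A o (fun i => qrep (args i)))).

Definition exact_cong (V : variety) (A : algebra L) (th : A -> A -> Prop) : Prop :=
  exact V (quotient th).
Definition projective_cong (V : variety) (A : algebra L) (th : A -> A -> Prop) : Prop :=
  projective V (quotient th).

Definition ker (A B : Type) (g : A -> B) : A -> A -> Prop := fun a a' => g a = g a'.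
Definition rel_sub (A : Type) (r s : A -> A -> Prop) : Prop := forall a a', r a a' -> s a a'.
Definition rel_eq (A : Type) (r s : A -> A -> Prop) : Prop := forall a a', r a a' <-> s a a'.

Definition prod_alg (m : nat) (E : 'I_m -> algebra L) : algebra L :=
  @Algebra L (forall k : 'I_m, E k)
    (fun o args => fun k => op (E k) o (fun i => args i k)).

Definition e_gen_problem (V : variety) (F : algebra L) (m : nat)
    (E : 'I_m -> algebra L) (h : F -> prod_alg E) : Prop :=
  hom h /\ (forall k, one_generated (E k) /\ exact V (E k)) /\
  (forall k (e : E k), exists a : F, h a k = e).

Definition solution (V : variety) (F : algebra L) (m : nat)
    (E : 'I_m -> algebra L) (h : F -> prod_alg E)
    (P : algebra L) (g : F -> P) : Prop :=
  hom g /\ fin_generated P /\ projective V P /\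
  exists f : P -> prod_alg E, hom f /\ forall a, f (g a) = h a.

Definition G_cong (V : variety) (F : algebra L) (m : nat)
    (E : 'I_m -> algebra L) (h : F -> prod_alg E) (th : F -> F -> Prop) : Prop :=
  exists (P : algebra L) (g : F -> P), solution V h g /\ rel_eq th (ker g).

End UA.

(* Main.v *)
From Pilot Require Import Defs.
From mathcomp Require Import all_boot.
From Stdlib Require Import ClassicalEpsilon ProofIrrelevance FunctionalExtensionality PropExtensionality.
From Stdlib Require List.
Import Pilot.Defs.

Set Implicit Arguments.
Unset Strict Implicit.
Unset Printing Implicit Defensive.

Lemma sig_ext (T : Type) (P : T -> Prop) (x y : {t | P t}) :
  proj1_sig x = proj1_sig y -> x = y.
Proof. destruct x as [x px], y as [y py]; simpl; intros E; subst y; f_equal; apply proof_irrelevance. Qed.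

Lemma eval_hom (L : signature) (A B : algebra L) (f : A -> B) (X : Type) (env : X -> A) (t : term L X) :
  hom f -> f (eval env t) = eval (fun x => f (env x)) t.
Proof.
intros Hf; induction t as [x|o args IH]; simpl; [reflexivity|].
rewrite Hf. f_equal. apply functional_extensionality; intro i; apply IH.
Qed.

Lemma inV_sub (L : signature) (V : variety L) (A : algebra L) (U : A -> Prop) (HU : closed U) :
  inV V A -> inV V (subalg HU).
Proof.
intros HA s t Hst env. apply sig_ext.
have hv : hom (fun x : subalg HU => proj1_sig x) by intros o args; reflexivity.
rewrite (eval_hom env s hv) (eval_hom env t hv). apply HA; assumption.
Qed.

Lemma generated_closed (L : signature) (A : algebra L) (S : A -> Prop) : closed (generated S).
Proof. intros o args Hargs W HW HSW. apply HW. intro i. apply Hargs; auto. Qed.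

Lemma generated_base (L : signature) (A : algebra L) (S : A -> Prop) x : S x -> generated S x.
Proof. intros Hx W HW HSW; auto. Qed.

Lemma generated_mono (L : signature) (A : algebra L) (S S' : A -> Prop) x :
  (forall y, S y -> S' y) -> generated S x -> generated S' x.
Proof. intros HS Hx W HW HSW. apply Hx; auto. Qed.

Lemma generated_min (L : signature) (A : algebra L) (S W : A -> Prop) x :
  closed W -> (forall y, S y -> W y) -> generated S x -> W x.
Proof. intros HW HS Hx; apply Hx; auto. Qed.

Lemma generated_hom (L : signature) (A B : algebra L) (f : A -> B) (S : A -> Prop) x :
  hom f -> generated S x -> generated (fun w => exists y, S y /\ w = f y) (f x).
Proof.
intros Hf Hx W HW HSW. apply (Hx (fun a => W (f a))).
- intros o args H. rewrite Hf. apply HW. exact H.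
- intros y Sy. apply HSW. eauto.
Qed.

Lemma hom_agree (L : signature) (A B : algebra L) (f g : A -> B) (S : A -> Prop) :
  hom f -> hom g -> (forall y, S y -> f y = g y) -> forall x, generated S x -> f x = g x.
Proof.
intros Hf Hg HS x Hx. apply (Hx (fun a => f a = g a)); [|exact HS].
intros o args H. rewrite Hf Hg. f_equal. apply functional_extensionality. exact H.
Qed.

Lemma free_generated (L : signature) (V : variety L) (Y : Type) (F : algebra L) (gen : Y -> F) :
  is_free V gen -> forall x, generated (fun w => exists y, w = gen y) x.
Proof.
intros [HF Hu] x.
pose U := generated (fun w => exists y, w = gen y).
have HU : closed U := @generated_closed L F _.
destruct (Hu (subalg HU) (fun y => exist U (gen y) (generated_base (ex_intro _ y erefl)))
   (@inV_sub _ _ _ _ HU HF)) as [[g [Hg Hgy]] _].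
have E := (proj2 (Hu F gen HF)) (fun a => proj1_sig (g a)) id.
have E' : proj1_sig (g x) = x.
{ apply E.
  - intros o args; rewrite Hg; reflexivity.
  - intros o args; reflexivity.
  - intros y; rewrite Hgy; reflexivity. }
rewrite -E'. exact (proj2_sig (g x)).
Qed.

Lemma list_family (Y : Type) (Q : nat -> list Y -> Prop) :
  (forall k ys ys', List.incl ys ys' -> Q k ys -> Q k ys') ->
  forall n, (forall k, k < n -> exists ys, Q k ys) -> exists ys, forall k, k < n -> Q k ys.
Proof.
intros Hm n; induction n as [|n IH]; intros H.
- exists nil. intros k Hk. by [].
- destruct IH as [ys1 H1].
  + intros k Hk; apply H; exact: (leq_trans Hk (leqnSn n)).
  + destruct (H n (ltnSn n)) as [ys2 H2].
    exists (List.app ys1 ys2). intros k Hk.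
    rewrite ltnS leq_eqVlt in Hk. case/orP: Hk => Hk.
    * move/eqP: Hk => ->. apply (Hm _ ys2); [apply List.incl_appr, List.incl_refl|exact H2].
    * apply (Hm _ ys1); [apply List.incl_appl, List.incl_refl|exact (H1 k Hk)].
Qed.

Definition Gs (L : signature) (Y : Type) (FY : algebra L) (gen : Y -> FY) (ys : list Y) : FY -> Prop :=
  generated (fun w => exists y, List.In y ys /\ w = gen y).

Lemma Gs_mono (L : signature) (Y : Type) (FY : algebra L) (gen : Y -> FY) ys ys' x :
  List.incl ys ys' -> Gs gen ys x -> Gs gen ys' x.
Proof.
intros Hi; apply generated_mono. intros w [y [Hy ->]]. exists y; split; auto.
Qed.

Lemma finite_support (L : signature) (Y : Type) (FY : algebra L) (gen : Y -> FY) x :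
  generated (fun w => exists y, w = gen y) x -> exists ys, Gs gen ys x.
Proof.
intros H. apply (H (fun x => exists ys, Gs gen ys x)).
- intros o args Hargs.
  destruct (@list_family Y (fun k ys => forall kk : 'I_(ar o), nat_of_ord kk = k -> Gs gen ys (args kk)))
    with (n := ar o) as [ys Hys].
  + intros k ys ys' Hi Hq kk Ek. apply (Gs_mono Hi). exact (Hq kk Ek).
  + intros k Hk. destruct (Hargs (Ordinal Hk)) as [ys Hy]. exists ys.
    intros kk Ekk. have -> : kk = Ordinal Hk by apply: val_inj. exact Hy.
  + exists ys. apply generated_closed. intro i. exact (Hys i (ltn_ord i) i erefl).
- intros y [y0 ->]. exists (y0 :: nil). apply generated_base. exists y0; split; [left; reflexivity|reflexivity].
Qed.

Lemma generated_sub (L : signature) (A : algebra L) (U : A -> Prop) (HU : closed U)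
  (S' : subalg HU -> Prop) (x : subalg HU) :
  generated (fun w => exists s, S' s /\ w = proj1_sig s) (proj1_sig x) -> generated S' x.
Proof.
intros Hx W HW HSW.
have := Hx (fun v => exists Hv : U v, W (exist U v Hv)).
intros H. destruct H as [Hv HWv].
- intros o args Hargs.
  pose pf i := proj1_sig (constructive_indefinite_description _ (Hargs i)).
  exists (HU o args pf).
  apply (HW o (fun i => exist U (args i) (pf i))).
  intro i. exact (proj2_sig (constructive_indefinite_description _ (Hargs i))).
- intros v [s [Ss ->]]. exists (proj2_sig s). destruct s as [s ps]; simpl. apply HSW; exact Ss.
- have -> : x = exist U (proj1_sig x) Hv by apply sig_ext. exact HWv.
Qed.

Lemma fin_gen_list (L : signature) (A : algebra L) (s : list A) :
  (forall x, generated (fun w => List.In w s) x) -> fin_generated A.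
Proof.
destruct s as [|a s'] eqn:Es; intros H.
- exists 0. unshelve eexists.
  { intro k. exfalso. by case: k. }
  intros x. apply (generated_mono (S := fun w => List.In w nil)); [|exact (H x)].
  intros w [].
- exists (List.length (a :: s')). exists (fun k => List.nth k (a :: s') a).
  intros x. apply (generated_mono (S := fun w => List.In w (a :: s'))); [|exact (H x)].
  intros w Hw. destruct (List.In_nth _ _ a Hw) as [n [Hn Hnth]].
  exists (Ordinal (introT ltP Hn)). simpl. symmetry. exact Hnth.
Qed.

Definition Ssub (L : signature) (Y : Type) (FY : algebra L) (gen : Y -> FY) (ys : list Y) : algebra L :=
  subalg (@generated_closed L FY (fun w => exists y, List.In y ys /\ w = gen y)).

Definition genS (L : signature) (Y : Type) (FY : algebra L) (gen : Y -> FY) (ys : list Y)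
  (y0 : {y | List.In y ys}) : Ssub gen ys :=
  exist _ (gen (proj1_sig y0))
    (generated_base (ex_intro _ (proj1_sig y0) (conj (proj2_sig y0) erefl))).

Definition inhS (L : signature) (Y : Type) (FY : algebra L) (gen : Y -> FY) (ys : list Y)
  (hne : forall y : Y, exists y1, List.In y1 ys) (y : Y) : inhabited (Ssub gen ys) :=
  match hne y with ex_intro y1 H1 => inhabits (genS gen (exist _ y1 H1)) end.

Definition mkS (L : signature) (Y : Type) (FY : algebra L) (gen : Y -> FY) (ys : list Y)
  (hne : forall y : Y, exists y1, List.In y1 ys) (y : Y) : Ssub gen ys :=
  epsilon (inhS gen hne y) (fun s => proj1_sig s = gen y).

Lemma mkS_spec (L : signature) (Y : Type) (FY : algebra L) (gen : Y -> FY) (ys : list Y)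
  (hne : forall y : Y, exists y1, List.In y1 ys) y (H : List.In y ys) :
  mkS gen hne y = genS gen (exist _ y H).
Proof.
apply sig_ext. simpl. unfold mkS. apply (epsilon_spec (inhS gen hne y) (fun s : Ssub gen ys => proj1_sig s = gen y)).
exists (genS gen (exist _ y H)). reflexivity.
Qed.

Lemma Ssub_gen (L : signature) (Y : Type) (FY : algebra L) (gen : Y -> FY) (ys : list Y)
  (hne : forall y : Y, exists y1, List.In y1 ys) (x : Ssub gen ys) :
  generated (fun w => List.In w (List.map (mkS gen hne) ys)) x.
Proof.
apply generated_sub. eapply generated_mono; [|exact (proj2_sig x)].
intros w [y [Hy ->]]. exists (mkS gen hne y). split.
- apply List.in_map; exact Hy.
- rewrite (@mkS_spec _ _ _ gen ys hne y Hy). reflexivity.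
Qed.

Lemma free_sub (L : signature) (V : variety L) (Y : Type) (FY : algebra L) (gen : Y -> FY) (ys : list Y)
  (Hfree : is_free V gen) (hne : forall y : Y, exists y1, List.In y1 ys) :
  is_free V (genS gen (ys := ys)) /\ fin_generated (Ssub gen ys).
Proof.
split; [|exact (fin_gen_list (@Ssub_gen _ _ _ gen ys hne))].
destruct Hfree as [HF Hu]. split; [exact (@inV_sub _ _ _ _ _ HF)|].
intros B f HB. split.
- pose inhB y : inhabited B :=
    match hne y with ex_intro y1 H1 => inhabits (f (exist _ y1 H1)) end.
  pose f' y := epsilon (inhB y) (fun b => exists H : List.In y ys, b = f (exist _ y H)).
  destruct (proj1 (Hu B f' HB)) as [g [Hg Hgy]].
  exists (fun s : Ssub gen ys => g (proj1_sig s)). split.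
  + intros o args. simpl. apply Hg.
  + intros [y Hy]. simpl. rewrite Hgy. unfold f'.
    have Hs := epsilon_spec (inhB y) (fun b => exists H : List.In y ys, b = f (exist _ y H)).
    destruct Hs as [H' E].
    * exists (f (exist _ y Hy)). exists Hy. reflexivity.
    * rewrite E. f_equal. apply sig_ext. reflexivity.
- intros g1 g2 Hg1 Hg2 Hag x. apply (hom_agree Hg1 Hg2 (S := fun w => List.In w (List.map (mkS gen hne) ys))).
  + intros w Hw. destruct (proj1 (List.in_map_iff _ _ _) Hw) as [y [<- Hy]].
    rewrite (@mkS_spec _ _ _ gen ys hne y Hy). apply Hag.
  + apply (@Ssub_gen _ _ _ gen ys hne).
Qed.

Lemma qrep_spec (L : signature) (A : algebra L) (th : A -> A -> Prop) (c : qcarrier th) :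
  proj1_sig c = th (qrep c).
Proof. unfold qrep. exact (proj2_sig (constructive_indefinite_description _ (proj2_sig c))). Qed.

Lemma qclass_eq (L : signature) (A : algebra L) (th : A -> A -> Prop) (Hth : congruence th)
  a (c : qcarrier th) : th a (qrep c) -> qclass th a = c.
Proof.
destruct Hth as [Hr [Hs [Ht _]]]. intros H.
apply sig_ext. simpl. rewrite (qrep_spec c).
apply functional_extensionality; intro b; apply propositional_extensionality; split; intros Hb.
- apply (Ht _ a); [apply Hs; exact H|exact Hb].
- apply (Ht _ (qrep c)); [exact H|exact Hb].
Qed.

Lemma qrep_class (L : signature) (A : algebra L) (th : A -> A -> Prop) (Hth : congruence th) a :
  th a (qrep (qclass th a)).
Proof.
have E := qrep_spec (qclass th a). simpl in E. rewrite E. apply (proj1 Hth).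
Qed.

Lemma qclass_hom (L : signature) (A : algebra L) (th : A -> A -> Prop) (Hth : congruence th) :
  @hom L A (quotient th) (qclass th).
Proof.
intros o args. simpl. symmetry. apply (qclass_eq Hth).
destruct Hth as [Hr [Hs [Ht Hc]]].
apply (Ht _ (op A o args)).
- apply Hc. intro k. apply Hs. apply (qrep_class (conj Hr (conj Hs (conj Ht Hc)))).
- apply (qrep_class (conj Hr (conj Hs (conj Ht Hc)))).
Qed.

Lemma part2 (L : signature) (V : variety L) (F : algebra L) (z : F)
    (Hfree : is_free V (fun _ : unit => z))
    (m : nat) (E : 'I_m -> algebra L) (h : F -> prod_alg E)
    (Hh : e_gen_problem V h)
    (th : F -> F -> Prop) (Hth : congruence th) :
  projective_cong V th -> rel_sub th (ker h) -> G_cong V h th.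
Proof.
intros Hproj Hsub. exists (quotient th), (qclass th).
have Hsym := proj1 (proj2 Hth). have Htr := proj1 (proj2 (proj2 Hth)).
split; [split; [exact (qclass_hom Hth)|split; [|split; [exact Hproj|]]]|].
- exists 1, (fun _ => qclass th z). intros x.
  have -> : x = qclass th (qrep x) by symmetry; apply (qclass_eq Hth); apply (proj1 Hth).
  have G := generated_hom (qclass_hom Hth) (free_generated Hfree (qrep x)).
  eapply generated_mono; [|exact G].
  intros w [y [[u ->] ->]]. exists ord0. reflexivity.
- exists (fun c => h (qrep c)). split.
  + intros o args. simpl. rewrite (Hsub _ (op F o (fun i => qrep (args i)))).
    * apply (proj1 Hh).
    * apply Hsym. apply (qrep_class Hth).
  + intros a. apply Hsub. apply Hsym. apply (qrep_class Hth).
- intros a a'. unfold ker. split.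
  + intros H. apply (qclass_eq Hth). apply (Htr _ a'); [exact H|apply (qrep_class Hth)].
  + intros Eq. have H1 := qrep_class Hth a. have H2 := qrep_class Hth a'.
    rewrite Eq in H1. apply (Htr _ (qrep (qclass th a'))); [exact H1|apply Hsym; exact H2].
Qed.

Lemma part1 (L : signature) (V : variety L) (F : algebra L) (z : F)
    (Hfree : is_free V (fun _ : unit => z))
    (m : nat) (E : 'I_m -> algebra L) (h : F -> prod_alg E)
    (th : F -> F -> Prop) (Hth : congruence th) :
  G_cong V h th -> exact_cong V th /\ rel_sub th (ker h).
Proof.
intros [P [g [[Hg [HPfg [Hproj [f [Hf Hfg]]]]] Hker]]].
split; last first.
{ intros a a' H. unfold ker. rewrite -!Hfg. f_equal. apply Hker; exact H. }
have Hsym := proj1 (proj2 Hth).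
destruct Hproj as [Y [FY [gen [Hfree' [i [j [Hi [Hj Hji]]]]]]]].
destruct HPfg as [r [gensP HgensP]].
have [ys [Hys hne]] : exists ys, (forall k, Gs gen ys (i (gensP k))) /\
                                 (forall y : Y, exists y1, List.In y1 ys).
{ destruct (@list_family Y (fun k ys => forall kk : 'I_r, nat_of_ord kk = k -> Gs gen ys (i (gensP kk))))
    with (n := r) as [ys0 Hys0].
  - intros k ys ys' Hin Hq kk Ek. apply (Gs_mono Hin). exact (Hq kk Ek).
  - intros k Hk. destruct (finite_support (free_generated Hfree' (i (gensP (Ordinal Hk))))) as [ys Hy].
    exists ys. intros kk Ekk. have -> : kk = Ordinal Hk by apply: val_inj. exact Hy.
  - destruct (classic (inhabited Y)) as [[y0]|HnY].
    + exists (y0 :: ys0). split.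
      * intros k. apply (@Gs_mono _ _ _ gen ys0); [intros w Hw; right; exact Hw|exact (Hys0 k (ltn_ord k) k erefl)].
      * intros y. exists y0. left. reflexivity.
    + exists ys0. split.
      * intros k. exact (Hys0 k (ltn_ord k) k erefl).
      * intros y. exfalso. apply HnY. exact (inhabits y).
}
have [HfreeS HfgS] := free_sub Hfree' hne.
have key : forall a, Gs gen ys (i (g a)).
{ intros a. have G := generated_hom Hi (HgensP (g a)).
  eapply generated_min; [apply generated_closed| |exact G].
  intros w [y [[k ->] ->]]. apply Hys. }
pose phi (a : F) : Ssub gen ys := exist _ (i (g a)) (key a).
have Hphi : hom phi.
{ intros o args. apply sig_ext. simpl. rewrite Hg Hi. reflexivity. }
pose U (s : Ssub gen ys) := exists a, s = phi a.
have HU : closed U.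
{ intros o args Hargs.
  exists (op F o (fun k => proj1_sig (constructive_indefinite_description _ (Hargs k)))).
  rewrite Hphi. f_equal. apply functional_extensionality; intro k.
  exact (proj2_sig (constructive_indefinite_description _ (Hargs k))). }
pose psi (a : F) : subalg HU := exist U (phi a) (ex_intro _ a erefl).
have Hpsi : hom psi.
{ intros o args. apply sig_ext. simpl. apply Hphi. }
have Hresp : forall a b, th a b -> psi a = psi b.
{ intros a b H. apply sig_ext. apply sig_ext. simpl. f_equal. apply Hker. exact H. }
exists {y | List.In y ys}, (Ssub gen ys), (genS gen (ys := ys)).
split; [exact HfreeS|split; [exact HfgS|]].
exists U, HU. split.
- apply (fin_gen_list (s := psi z :: nil)).
  intros [s [a Ha]].
  have -> : exist U s (ex_intro _ a Ha) = psi a by apply sig_ext; exact Ha.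
  have G := generated_hom Hpsi (free_generated Hfree a).
  eapply generated_mono; [|exact G].
  intros w [y [[u ->] ->]]. left. reflexivity.
- exists (fun c => psi (qrep c)).
  exists (fun x : subalg HU => qclass th (proj1_sig (constructive_indefinite_description _ (proj2_sig x)))).
  split; [|split].
  + intros o args. simpl.
    transitivity (psi (op F o (fun k => qrep (args k)))).
    * apply Hresp. apply Hsym. apply (qrep_class Hth).
    * apply Hpsi.
  + intros c. simpl.
    match goal with |- context [constructive_indefinite_description ?P ?H] =>
      destruct (constructive_indefinite_description P H) as [a Ha] end. simpl.
    apply (qclass_eq Hth). apply Hker.
    have := f_equal (fun s => j (proj1_sig s)) Ha. simpl. rewrite !Hji. intros Eq. unfold ker. rewrite Eq. reflexivity.
  + intros x. destruct x as [s Hs]. simpl.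
    match goal with |- context [constructive_indefinite_description ?P ?H] =>
      destruct (constructive_indefinite_description P H) as [a Ha] end. simpl.
    transitivity (psi a).
    * apply Hresp. apply Hsym. apply (qrep_class Hth).
    * apply sig_ext. simpl. symmetry. exact Ha.
Qed.

Theorem theorem4p6 (L : signature) (V : variety L) (F : algebra L) (z : F)
    (Hfree : is_free V (fun _ : unit => z))
    (m : nat) (E : 'I_m -> algebra L) (h : F -> prod_alg E)
    (Hh : e_gen_problem V h)
    (th : F -> F -> Prop) (Hth : congruence th) :
  (G_cong V h th -> exact_cong V th /\ rel_sub th (ker h)) /\
  (projective_cong V th -> rel_sub th (ker h) -> G_cong V h th).
Proof.
split.
- exact (part1 Hfree Hth).
- exact (part2 Hfree Hh Hth).
Qed.
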